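(* There exist a financial system $S$ in the base model (all contracts of the same priority) and distinct banks $u,v_1,v_2$ with $e_{v_1},e_{v_2}\ge 1$ such that the following holds. For $(s_1,s_2)\in\{C,D\}^2$ let $S_{s_1s_2}$ be the system obtained from $S$ by, for each $i$ with $s_i=C$, decreasing $e_{v_i}$ by $1$ and increasing $e_u$ by $1$ (bank $v_i$ donates one unit to $u$). Then each $S_{s_1s_2}$ has exactly one solution, and the payoffs $(q_{v_1},q_{v_2})$ of $v_1,v_2$ at that solution, measured relative to the original external assets (i.e. the payoff of $v_i$ in $S_{s_1s_2}$ minus $e_{v_i}$ of $S$ plus the external assets $v_i$ still holds, equivalently its net gain from contracts minus the donated amount), are $(2,2)$ for $CC$, $(0,0)$ for $DD$, $(2,3)$ for $CD$, and $(3,2)$ for $DC$. In particular, in the two-player game where $v_i$ chooses $s_i$, the pure Nash equilibria are exactly $CD$ and $DC$.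
   Context: A financial system with payment priorities consists of: a finite set $V$ of banks; external assets $e_v\ge 0$ for each $v\in V$; a number $P\ge 1$ of priority levels; and a finite set of contracts, each of which is either a debt contract from a debtor $u$ to a creditor $v\neq u$ with weight $c>0$, or a credit default swap (CDS) from a debtor $u$ to a creditor $v\neq u$ in reference to a bank $w\notin\{u,v\}$ (the reference entity) with weight $c>0$. Every contract has a priority in $\{1,\dots,P\}$ (1 is the highest priority). It is assumed that every bank that is the reference entity of some CDS is the debtor of at least one debt contract of positive weight. Given a recovery rate vector $r\in[0,1]^V$: the liability of a contract $k$ is $l_k(r)=c$ if $k$ is a debt of weight $c$, and $l_k(r)=c\,(1-r_w)$ if $k$ is a CDS of weight $c$ in reference to $w$. For a bank $v$, $l_v(r)$ is the sum of the liabilities of the contracts with debtor $v$; $l_v^{(\rho)}(r)$ is the sum of the liabilities of contracts with debtor $v$ and priority $\rho$; and $l_v^{(\le\rho)}(r)=\sum_{i=1}^{\rho}l_v^{(i)}(r)$ (with $l_v^{(\le 0)}=0$). The payment on a contract $k$ with debtor $v$ and priority $\rho$ is $p_k(r)=l_k(r)\cdot\min\{1,\max\{0,(r_v l_v(r)-l_v^{(\le\rho-1)}(r))/l_v^{(\rho)}(r)\}\}$ (and $p_k(r)=0$ if $l_v^{(\rho)}(r)=0$). The assets of $v$ are $a_v(r)=e_v+\sum_k p_k(r)$, summing over contracts $k$ with creditor $v$. A vector $r\in[0,1]^V$ is a solution (clearing vector) if for every $v\in V$: $r_v=1$ when $a_v(r)\ge l_v(r)$, and $r_v=a_v(r)/l_v(r)$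 when $a_v(r)<l_v(r)$. The payoff of $v$ is $q_v(r)=\max\{a_v(r)-l_v(r),0\}$. When $P=1$, payments reduce to $p_k(r)=r_v\,l_k(r)$ (principle of proportionality); this is called the base model. In this statement the acting banks $v_1,v_2$ have no outgoing contracts, and the game payoff of $v_i$ in $S_{s_1s_2}$ is defined as $q_{v_i}$ computed in $S_{s_1s_2}$ minus the external assets $e_{v_i}$ that $v_i$ had in $S$ plus... more simply: the total incoming payments of $v_i$ at the solution of $S_{s_1s_2}$ minus the amount ($0$ or $1$) that $v_i$ donated. *)

(* Defs.v *)
From Stdlib Require Import Reals Lra List Arith.
Import ListNotations.
Open Scope R_scope.

(* Banks are the natural numbers 0 .. nb-1.  A contract in the base model
   (a single priority level, so no priority field is needed). *)
Inductive contract : Type :=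
| Debt (u v : nat) (c : R)
| CDS  (u v w : nat) (c : R).       (* CDS from u to v in reference to w, weight c *)

Definition debtor (k : contract) : nat :=
  match k with Debt u _ _ => u | CDS u _ _ _ => u end.
Definition creditor (k : contract) : nat :=
  match k with Debt _ v _ => v | CDS _ v _ _ => v end.
Definition weight (k : contract) : R :=
  match k with Debt _ _ c => c | CDS _ _ _ c => c end.

Record system : Type := Build_system {
  nb : nat;
  ext : nat -> R;
  cons : list contract }.

Definition well_formed (S : system) : Prop :=
  (forall v, (v < nb S)%nat -> 0 <= ext S v) /\
  (forall k, In k (cons S) ->
     (debtor k < nb S)%nat /\ (creditor k < nb S)%nat /\
     debtor k <> creditor k /\ 0 < weight k /\
     match k with
     | Debt _ _ _ => True
     | CDS u v w _ =>
         (w < nb S)%nat /\ w <> u /\ w <> v /\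
         exists v' c', In (Debt w v' c') (cons S) /\ 0 < c'
     end).

Definition liab (r : nat -> R) (k : contract) : R :=
  match k with
  | Debt _ _ c => c
  | CDS _ _ w c => c * (1 - r w)
  end.

Definition lv (S : system) (r : nat -> R) (v : nat) : R :=
  fold_right (fun k acc => (if Nat.eqb (debtor k) v then liab r k else 0) + acc)
             0 (cons S).

(* payment on contract k in the base model (principle of proportionality) *)
Definition payment (r : nat -> R) (k : contract) : R :=
  r (debtor k) * liab r k.

Definition assets (S : system) (r : nat -> R) (v : nat) : R :=
  ext S v +
  fold_right (fun k acc => (if Nat.eqb (creditor k) v then payment r k else 0) + acc)
             0 (cons S).

Definition is_solution (S : system) (r : nat -> R) : Prop :=
  forall v, (v < nb S)%nat ->
    0 <= r v <= 1 /\
    (lv S r v <= assets S r v -> r v = 1) /\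
    (assets S r v < lv S r v -> r v = assets S r v / lv S r v).

Definition unique_solution (S : system) (r : nat -> R) : Prop :=
  is_solution S r /\
  forall r', is_solution S r' -> forall v, (v < nb S)%nat -> r' v = r v.

Definition payoff (S : system) (r : nat -> R) (v : nat) : R :=
  Rmax (assets S r v - lv S r v) 0.

Definition no_outgoing (S : system) (v : nat) : Prop :=
  forall k, In k (cons S) -> debtor k <> v.

Inductive strat : Type := SC | SD.

Definition don (s : strat) : R := match s with SC => 1 | SD => 0 end.

Definition ind (x y : nat) : R := if Nat.eqb x y then 1 else 0.

Definition donate (S : system) (u v1 v2 : nat) (s1 s2 : strat) : system :=
  Build_system (nb S)
    (fun x => ext S x - don s1 * ind x v1 - don s2 * ind x v2
              + (don s1 + don s2) * ind x u)
    (cons S).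

Definition nash (pay : strat -> strat -> R * R) (s1 s2 : strat) : Prop :=
  (forall t, fst (pay t s2) <= fst (pay s1 s2)) /\
  (forall t, snd (pay s1 t) <= snd (pay s1 s2)).

(* Main.v *)
Require Import Defs.
From Stdlib Require Import Reals List Lra Lia.
Import ListNotations.
Open Scope R_scope.

Definition S0 : system := Build_system 7
  (fun i => match i with 1%nat => 1 | 2%nat => 1 | 5%nat => 1 | 6%nat => 6 | _ => 0 end)
  [Debt 0 3 1; Debt 3 5 1; CDS 5 4 3 1; Debt 4 5 1; CDS 6 1 4 3; CDS 6 2 4 3].

Definition rpos : nat -> R := fun i => if Nat.eqb i 4 then 0 else 1.
Definition rzero : nat -> R := fun i => match i with 0%nat => 0 | 3%nat => 0 | _ => 1 end.

Definition rof (s1 s2 : strat) := match s1, s2 with SD, SD => rzero | _, _ => rpos end.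

Lemma sol s1 s2 : unique_solution (donate S0 0 1 2 s1 s2) (rof s1 s2).
Proof.
  split.
  - intros v Hv.
    do 7 (destruct v as [|v]; [destruct s1, s2; unfold donate, lv, assets, payment, liab, rof, rpos, rzero, Defs.ind, don; simpl;
      repeat split; intros; try lra; field_simplify; lra |]).
    simpl in Hv; lia.
  - intros r' Hr v Hv.
    assert (B : forall i, (i < 7)%nat -> 0 <= r' i <= 1) by (intros i Hi; apply (Hr i); simpl; lia).
    pose proof (B 0%nat ltac:(lia)). pose proof (B 1%nat ltac:(lia)). pose proof (B 2%nat ltac:(lia)).
    pose proof (B 3%nat ltac:(lia)). pose proof (B 4%nat ltac:(lia)). pose proof (B 5%nat ltac:(lia)).
    pose proof (B 6%nat ltac:(lia)).
    destruct (Hr 5%nat ltac:(simpl; lia)) as [_ [H5a _]].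
    destruct (Hr 6%nat ltac:(simpl; lia)) as [_ [H6a _]].
    destruct (Hr 0%nat ltac:(simpl; lia)) as [_ [H0a H0b]].
    destruct (Hr 3%nat ltac:(simpl; lia)) as [_ [H3a H3b]].
    destruct (Hr 4%nat ltac:(simpl; lia)) as [_ [H4a H4b]].
    destruct (Hr 1%nat ltac:(simpl; lia)) as [_ [H1a _]].
    destruct (Hr 2%nat ltac:(simpl; lia)) as [_ [H2a _]].
    clear Hr B.
    destruct s1, s2;
    unfold donate, lv, assets, payment, liab, Defs.ind, don in *; simpl in *;
    (assert (E5 : r' 5%nat = 1) by (apply H5a; lra));
    (assert (E6 : r' 6%nat = 1) by (apply H6a; lra));
    rewrite E5, E6 in *;
    (assert (E1 : r' 1%nat = 1) by (apply H1a; nra));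
    (assert (E2 : r' 2%nat = 1) by (apply H2a; nra)).
    all: first
      [ (assert (E0 : r' 0%nat = 1) by (apply H0a; lra));
        (assert (E3 : r' 3%nat = 1) by (apply H3a; rewrite E0; lra));
        (assert (E4 : r' 4%nat = 0) by (rewrite H4b; rewrite E3; [field | lra]))
      | (assert (E0 : r' 0%nat = 0) by (rewrite H0b; [field | lra]));
        (assert (E3 : r' 3%nat = 0) by (rewrite H3b; rewrite E0; [field | lra]));
        (assert (E4 : r' 4%nat = 1) by (apply H4a; rewrite E3; lra)) ].
    all: unfold rof, rpos, rzero;
      do 7 (destruct v as [|v]; [simpl; lra|]); lia.
Qed.

Definition pay0 (s1 s2 : strat) : R * R :=
  match s1, s2 with
  | SC, SC => (2, 2) | SD, SD => (0, 0) | SC, SD => (2, 3) | SD, SC => (3, 2) end.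

Theorem mainTheorem12 :
  exists (S : system) (u v1 v2 : nat),
    well_formed S /\
    (u < nb S)%nat /\ (v1 < nb S)%nat /\ (v2 < nb S)%nat /\
    u <> v1 /\ u <> v2 /\ v1 <> v2 /\
    1 <= ext S v1 /\ 1 <= ext S v2 /\
    no_outgoing S v1 /\ no_outgoing S v2 /\
    exists pay : strat -> strat -> R * R,
      (forall s1 s2, exists r,
          unique_solution (donate S u v1 v2 s1 s2) r /\
          pay s1 s2 =
            (payoff (donate S u v1 v2 s1 s2) r v1 - ext S v1,
             payoff (donate S u v1 v2 s1 s2) r v2 - ext S v2)) /\
      pay SC SC = (2, 2) /\ pay SD SD = (0, 0) /\
      pay SC SD = (2, 3) /\ pay SD SC = (3, 2) /\
      (forall s1 s2, nash pay s1 s2 <-> (s1 = SC /\ s2 = SD) \/ (s1 = SD /\ s2 = SC)).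
Proof.
  exists S0, 0%nat, 1%nat, 2%nat.
  split.
  { split.
    - intros v Hv; simpl in Hv.
      do 7 (destruct v as [|v]; [simpl; lra|]); lia.
    - intros k Hk; simpl in Hk.
      repeat destruct Hk as [<- | Hk]; try contradiction; simpl;
        repeat split; try lia; try lra;
        (exists 5%nat, 1; split; [simpl; tauto | lra]). }
  do 6 (split; [simpl; lia|]).
  split; [simpl; lra|]. split; [simpl; lra|].
  split. { intros k Hk; simpl in Hk; repeat destruct Hk as [<- | Hk]; try contradiction; simpl; lia. }
  split. { intros k Hk; simpl in Hk; repeat destruct Hk as [<- | Hk]; try contradiction; simpl; lia. }
  exists pay0.
  split.
  { intros s1 s2. exists (rof s1 s2). split; [apply sol|].
    destruct s1, s2; unfold payoff, donate, lv, assets, payment, liab, Defs.ind, don, rof, rpos, rzero, pay0;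
      simpl; rewrite !Rmax_left by lra; f_equal; lra. }
  do 4 (split; [reflexivity|]).
  intros s1 s2; unfold nash; destruct s1, s2; simpl; split.
  all: try (intros [[E1 E2]|[E1 E2]]; try discriminate; split; intros []; simpl; lra).
  all: first
    [ intros _; first [left; split; reflexivity | right; split; reflexivity]
    | intros [[E1 E2]|[E1 E2]]; try discriminate; split; intros []; simpl; lra
    | intros [Ha Hb]; exfalso; pose proof (Ha SD); pose proof (Ha SC);
      pose proof (Hb SD); pose proof (Hb SC); simpl in *; lra ].
Qed.
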